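(* Let $k\ge 2$, let $G$ be a finite simple graph, and let $u,v\in V(G)$ satisfy $N(u)=N(v)$. Then in every closed neighborhood balanced $k$-coloring $c$ of $G$, $c(u)=c(v)$.
   Context: $N(v)=\{u : uv\in E(G)\}$ and $N[v]=N(v)\cup\{v\}$. A closed neighborhood balanced $k$-coloring of $G$ is a map $c: V(G)\to\{1,\dots,k\}$ such that for every vertex $v$ the numbers $|\{u\in N[v] : c(u)=i\}|$, $i=1,\dots,k$, are all equal. *)

(* Defs.v *)
From mathcomp Require Import all_boot.
Set Implicit Arguments. Unset Strict Implicit. Unset Printing Implicit Defensive.

Definition simple_graph (V : finType) (adj : rel V) : Prop :=
  symmetric adj /\ irreflexive adj.

Definition nbhd (V : finType) (adj : rel V) (v : V) : {set V} :=
  [set u | adj u v].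
Definition cnbhd (V : finType) (adj : rel V) (v : V) : {set V} :=
  v |: nbhd adj v.

(* closed neighborhood balanced k-coloring, colours 1..k encoded as 'I_k *)
Definition cnb_coloring (V : finType) (adj : rel V) (k : nat) (c : V -> 'I_k) : Prop :=
  forall (v : V) (i j : 'I_k),
    #|[set u in cnbhd adj v | c u == i]| = #|[set u in cnbhd adj v | c u == j]|.

(* Main.v *)
Require Import Defs.
From mathcomp Require Import all_boot.
From Stdlib Require Import Lia.
From mathcomp Require Import zify.

Lemma cnb_count (V : finType) (adj : rel V) k (c : V -> 'I_k) (w : V) (i : 'I_k) :
  irreflexive adj ->
  #|[set x in cnbhd adj w | c x == i]| =
  (c w == i) + #|[set x in nbhd adj w | c x == i]|.
Proof.
move=> irr.
have -> : [set x in cnbhd adj w | c x == i] =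
   (if c w == i then w |: [set x in nbhd adj w | c x == i]
    else [set x in nbhd adj w | c x == i]).
  apply/setP=> x; rewrite /cnbhd !inE.
  have [-> | hx] := eqVneq x w; first by rewrite irr /=; case: (c w == i); rewrite ?inE ?eqxx ?irr.
  by case: (c w == i); rewrite ?inE ?(negbTE hx).
by case: (c w == i); rewrite ?cardsU1 ?inE ?irr.
Qed.

Theorem mainTheorem18 (k : nat) (V : finType) (adj : rel V) (u v : V)
  (c : V -> 'I_k) :
  2 <= k -> simple_graph adj -> nbhd adj u = nbhd adj v ->
  cnb_coloring adj c -> c u = c v.
Proof.
move=> _ [sym irr] hN hc.
apply/eqP; apply/negP => /negP ne.
have h1 := hc u (c u) (c v).
have h2 := hc v (c u) (c v).
rewrite !cnb_count // hN in h1.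
rewrite !cnb_count // in h2.
move: h1 h2; rewrite eqxx (negbTE ne) eq_sym (negbTE ne) /=.
lia.
Qed.
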